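(* Let $\mathbb{A}$ be the Fraïssé limit of the class $\mathscr{C}$ of all totally ordered structures from a free amalgamation class $\mathscr{C}_0$ of finite irreflexive $\sigma_0$-structures (with $\sigma_0$ finite, unary and binary relations only). Let $X, Y, \{z\}\subseteq\mathbb{A}$ be pairwise disjoint finite sets. Then there is $\tau\in\operatorname{Aut}(\mathbb{A})$ such that (1) $\tau(x)=x$ for all $x\in X$; (2) $\tau(z)$ is unrelated to every $y\in Y$ and to $z$; (3) $\tau(z)>z$.
   Context: Two elements $u,v$ are related if $u=v$ or $R(u,v)$ or $R(v,u)$ holds for some binary $R\in\sigma_0$. A free amalgamation class is a class $\operatorname{Forb}(\mathscr{F})$ of all finite $\sigma_0$-structures embedding no member of $\mathscr{F}$, where in each member of $\mathscr{F}$ every two elements are related. Irreflexive: each binary relation holds only between distinct elements. $\mathscr{C}$ consists of all $(\sigma_0\uplus\{<\})$-structures obtained from members of $\mathscr{C}_0$ by interpreting $<$ as any total order; $\mathbb{A}$ is its Fraïssé limit (the countable homogeneous structure with age $\mathscr{C}$). *)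

(* Defs.v *)
From mathcomp Require Import all_boot.
From Stdlib Require List.

Set Implicit Arguments.
Unset Strict Implicit.
Unset Printing Implicit Defensive.

Section Structures.
(* The finite relational signature sigma_0: U = unary symbols, B = binary symbols. *)
Variables (U B : finType).

Record sstr := SStr {
  scar :> Type;
  sun : U -> scar -> Prop;
  sbin : B -> scar -> scar -> Prop }.

Record ostr := OStr {
  ored :> sstr;
  olt : ored -> ored -> Prop }.

Definition finite_type (T : Type) : Prop :=
  exists l : list T, forall x : T, List.In x l.

Definition countable_type (T : Type) : Prop :=
  exists f : T -> nat, injective f.

Definition sembedding (S T : sstr) (f : S -> T) : Prop :=
  injective f /\
  (forall (u : U) (x : S), sun u x <-> sun u (f x)) /\
  (forall (r : B) (x y : S), sbin r x y <-> sbin r (f x) (f y)).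

Definition sembeds (S T : sstr) : Prop := exists f : S -> T, sembedding f.

Definition oembedding (S T : ostr) (f : S -> T) : Prop :=
  sembedding (S := S) (T := T) f /\
  (forall x y : S, olt x y <-> olt (f x) (f y)).

Definition oembeds (S T : ostr) : Prop := exists f : S -> T, oembedding f.

Definition related (S : sstr) (u v : S) : Prop :=
  u = v \/ exists r : B, sbin r u v \/ sbin r v u.

Definition irreflexive_str (S : sstr) : Prop :=
  forall (r : B) (x : S), ~ sbin r x x.

Definition Forb (F : sstr -> Prop) (S : sstr) : Prop :=
  finite_type S /\ forall G : sstr, F G -> ~ sembeds G S.

Definition strict_total_order (T : Type) (lt : T -> T -> Prop) : Prop :=
  (forall x, ~ lt x x) /\
  (forall x y z, lt x y -> lt y z -> lt x z) /\
  (forall x y, x <> y -> lt x y \/ lt y x).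

(* the class C: members of C_0 = Forb(F) expanded by an arbitrary total order *)
Definition classC (F : sstr -> Prop) (S : ostr) : Prop :=
  Forb F S /\ strict_total_order (@olt S).

Definition automorphism (A : ostr) (t : A -> A) : Prop :=
  bijective t /\ oembedding (S := A) (T := A) t.

Definition homogeneous (A : ostr) : Prop :=
  forall (D : list A) (g : A -> A),
    (forall x y, List.In x D -> List.In y D -> g x = g y -> x = y) ->
    (forall u x, List.In x D -> (sun u x <-> sun u (g x))) ->
    (forall r x y, List.In x D -> List.In y D ->
        (sbin r x y <-> sbin r (g x) (g y))) ->
    (forall x y, List.In x D -> List.In y D -> (olt x y <-> olt (g x) (g y))) ->
    exists t : A -> A, automorphism t /\ forall x, List.In x D -> t x = g x.

Definition age_is (F : sstr -> Prop) (A : ostr) : Prop :=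
  forall S : ostr, classC F S <-> (finite_type S /\ oembeds S A).

Definition fraisse_limit (F : sstr -> Prop) (A : ostr) : Prop :=
  countable_type A /\ homogeneous A /\ age_is F A.

End Structures.

(* Main.v *)
Require Import Defs.
From mathcomp Require Import all_boot.
From Stdlib Require List.
From Stdlib Require Import ClassicalEpsilon ProofIrrelevance Classical Setoid.
Set Implicit Arguments.
Unset Strict Implicit.
Lemma sig_eq (T : Type) (P : T -> Prop) (x y : {a | P a}) :
  proj1_sig x = proj1_sig y -> x = y.
Proof.
  destruct x as [a p], y as [b q]; simpl; intros ->.
  f_equal; apply proof_irrelevance.
Qed.

Definition subS (U B : finType) (A : ostr U B) (L : list A) : ostr U B :=
  @OStr U B (@SStr U B {a : A | List.In a L}
     (fun u x => sun u (proj1_sig x)) (fun r x y => sbin r (proj1_sig x) (proj1_sig y)))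
   (fun x y => olt (proj1_sig x) (proj1_sig y)).

Lemma sig_finite (T : Type) (L : list T) : exists l : list {a : T | List.In a L}, forall x, List.In x l.
Proof.
  pose h := fun a : T => match excluded_middle_informative (List.In a L) with
     | left p => cons (exist (fun a => List.In a L) a p) nil | right _ => nil end.
  exists (List.flat_map h L).
  intros [a p]. apply List.in_flat_map. exists a. split; [exact p|].
  unfold h. destruct (excluded_middle_informative (List.In a L)) as [q|n]; [|contradiction].
  left. apply sig_eq. reflexivity.
Qed.

Lemma subS_classC (U B : finType) (F : sstr U B -> Prop) (A : ostr U B) (L : list A) :
  fraisse_limit F A -> classC F (subS L).
Proof.
  intros [_ [_ Hage]]. apply Hage. split.
  - exact (sig_finite L).
  - exists (@proj1_sig A (fun a => List.In a L)). split; [split|].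
    + intros x y; apply sig_eq.
    + split; intros; simpl; tauto.
    + intros; simpl; tauto.
Qed.

Lemma olt_props (U B : finType) (F : sstr U B -> Prop) (A : ostr U B) :
  fraisse_limit F A ->
  (forall a : A, ~ olt a a) /\
  (forall a b c : A, olt a b -> olt b c -> olt a c) /\
  (forall a b : A, a <> b -> olt a b \/ olt b a).
Proof.
  intros HA. split; [|split].
  - intros a. destruct (subS_classC (a :: nil) HA) as [_ [H _]].
    refine (H (exist (fun x : A => List.In x (a :: nil)) a _)); simpl; tauto.
  - intros a b c. destruct (subS_classC (a :: b :: c :: nil) HA) as [_ [_ [H _]]].
    set P := (fun x : A => List.In x (a :: b :: c :: nil)).
    refine (H (exist P a _) (exist P b _) (exist P c _)); unfold P; simpl; tauto.
  - intros a b ne. destruct (subS_classC (a :: b :: nil) HA) as [_ [_ [_ H]]].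
    set P := (fun x : A => List.In x (a :: b :: nil)).
    assert (pa : P a) by (unfold P; simpl; tauto).
    assert (pb : P b) by (unfold P; simpl; tauto).
    apply (H (exist P a pa) (exist P b pb)).
    intros E; apply ne; exact (f_equal (@proj1_sig _ _) E).
Qed.
Definition pr (U B : finType) (A : ostr U B) (D : list A) (z : A)
  (o : option {a : A | List.In a D}) : A :=
  match o with None => z | Some a => proj1_sig a end.

Definition extS (U B : finType) (A : ostr U B) (D X : list A) (z : A) : ostr U B :=
  @OStr U B (@SStr U B (option {a : A | List.In a D})
     (fun u o => sun u (pr z o))
     (fun r o1 o2 => match o1, o2 with
       | Some a, Some b => sbin r (proj1_sig a) (proj1_sig b)
       | None, Some b => List.In (proj1_sig b) X /\ sbin r z (proj1_sig b)
       | Some a, None => List.In (proj1_sig a) X /\ sbin r (proj1_sig a) z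
       | None, None => sbin r z z end))
   (fun o1 o2 => match o1, o2 with
       | Some a, Some b => olt (proj1_sig a) (proj1_sig b)
       | None, Some b => olt z (proj1_sig b)
       | Some a, None => olt (proj1_sig a) z \/ proj1_sig a = z
       | None, None => False end).

Lemma extS_classC (U B : finType) (F : sstr U B -> Prop) (A : ostr U B)
  (D X : list A) (z : A) :
  (forall G : sstr U B, F G -> finite_type G /\ forall u v : G, related u v) ->
  fraisse_limit F A -> List.In z D -> ~ List.In z X ->
  classC F (extS D X z).
Proof.
  intros HF HA zD zX.
  destruct (olt_props HA) as [Hirr [Htr Htot]].
  split; [split|].
  - destruct (sig_finite D) as [l Hl].
    exists (None :: List.map Some l). intros [x|]; simpl; [right; apply List.in_map; apply Hl | left; reflexivity].
  - intros G HG [f [finj [fun_ fbin]]].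
    destruct (HF G HG) as [_ Hrel].
    destruct (subS_classC D HA) as [[_ Hforb] _].
    apply (Hforb G HG).
    set z0 := exist (fun a : A => List.In a D) z zD.
    exists (fun g => match f g with None => z0 | Some a => a end).
    assert (Hpr : forall g, proj1_sig (match f g with None => z0 | Some a => a end) = pr z (f g)).
    { intros g; destruct (f g); reflexivity. }
    assert (Hnone : forall x y b, f x = None -> f y = Some b -> List.In (proj1_sig b) X).
    { intros x y b Hx Hy. destruct (Hrel x y) as [E|[r [H|H]]].
      - subst y; congruence.
      - apply fbin in H; rewrite Hx Hy in H; simpl in H; tauto.
      - apply fbin in H; rewrite Hx Hy in H; simpl in H; tauto. }
    split; [|split].
    + intros x y Exy. apply finj.
      destruct (f x) as [a|] eqn:Ex, (f y) as [b|] eqn:Ey; try congruence.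
      * exfalso. apply zX. assert (H := Hnone y x a Ey Ex). rewrite Exy in H. exact H.
      * exfalso. apply zX. assert (H := Hnone x y b Ex Ey). rewrite -Exy in H. exact H.
    + intros u x. rewrite (fun_ u x). simpl. rewrite Hpr. tauto.
    + intros r x y. rewrite (fbin r x y). simpl. rewrite !Hpr.
      destruct (f x) as [a|] eqn:Ex, (f y) as [b|] eqn:Ey; simpl; try tauto.
      * assert (H := Hnone y x a Ey Ex). tauto.
      * assert (H := Hnone x y b Ex Ey). tauto.
  - split; [|split].
    + intros [a|]; simpl; [apply Hirr | tauto].
    + simpl. intros [a|] [b|] [c|]; simpl; intros H1 H2; try tauto; try solve [eauto].
      * destruct H2 as [H2|H2]; [left; eauto | left; rewrite -H2; exact H1].
      * destruct H1 as [H1|H1]; [eauto | rewrite H1; exact H2].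
      * destruct H2 as [H2|H2]; [apply (Hirr z); eauto | rewrite H2 in H1; apply (Hirr z); exact H1].
    + simpl. intros [a|] [b|] ne; simpl.
      * apply Htot. intros E; apply ne; f_equal; apply sig_eq; exact E.
      * destruct (classic (proj1_sig a = z)) as [E|E]; [left; tauto|].
        destruct (Htot _ _ E); tauto.
      * destruct (classic (proj1_sig b = z)) as [E|E]; [right; tauto|].
        destruct (Htot _ _ E); tauto.
      * congruence.
Qed.
Theorem mainTheorem10 (U B : finType) (F : sstr U B -> Prop) (A : ostr U B) :
  (forall G : sstr U B, F G -> finite_type G /\ forall u v : G, related u v) ->
  (forall S : sstr U B, Forb F S -> irreflexive_str S) ->
  fraisse_limit F A ->
  forall (X Y : list A) (z : A),
    (forall x, List.In x X -> ~ List.In x Y) ->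
    ~ List.In z X -> ~ List.In z Y ->
    exists tau : A -> A,
      automorphism tau /\
      (forall x, List.In x X -> tau x = x) /\
      (forall y, List.In y Y -> ~ related (S := A) (tau z) y) /\
      ~ related (S := A) (tau z) z /\
      olt z (tau z).
Proof.
  intros HF _ HA X Y z HXY zX zY.
  set D := z :: X ++ Y.
  assert (zD : List.In z D) by (left; reflexivity).
  assert (SC := extS_classC HF HA zD zX).
  destruct (olt_props HA) as [Hirr _].
  destruct HA as [_ [Hhom Hage]].
  destruct (proj1 (Hage _) SC) as [_ [e [[einj [eun ebin]] elt]]].
  set P := fun a : A => List.In a D.
  set g := fun a : A => match excluded_middle_informative (List.In a D) with
     | left p => e (Some (exist P a p)) | right _ => a end.
  assert (gD : forall a (p : List.In a D), g a = e (Some (exist P a p))).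
  { intros a p. unfold g. destruct (excluded_middle_informative (List.In a D)) as [q|n]; [|contradiction].
    do 2 f_equal. apply sig_eq. reflexivity. }
  destruct (Hhom D g) as [t [[tbij [[tinj [tun tbin]] tlt]] tD]].
  { intros x y px py. rewrite (gD x px) (gD y py). intros E. apply einj in E.
    injection E. tauto. }
  { intros u x px. rewrite (gD x px). exact (eun u (Some (exist P x px))). }
  { intros r x y px py. rewrite (gD x px) (gD y py). exact (ebin r (Some (exist P x px)) (Some (exist P y py))). }
  { intros x y px py. rewrite (gD x px) (gD y py). exact (elt (Some (exist P x px)) (Some (exist P y py))). }
  destruct tbij as [t' tK t'K].
  set w := t' (e None).
  assert (tw : t w = e None) by (apply t'K).
  assert (td : forall d (pd : List.In d D), t d = e (Some (exist P d pd))).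
  { intros d pd. rewrite (tD d pd). apply gD. }
  assert (Hb1 : forall r d, List.In d D -> (sbin r w d <-> List.In d X /\ sbin r z d)).
  { intros r d pd. rewrite (tbin r w d) tw (td d pd).
    exact (iff_sym (ebin r None (Some (exist P d pd)))). }
  assert (Hb2 : forall r d, List.In d D -> (sbin r d w <-> List.In d X /\ sbin r d z)).
  { intros r d pd. rewrite (tbin r d w) tw (td d pd).
    exact (iff_sym (ebin r (Some (exist P d pd)) None)). }
  assert (Hbw : forall r, sbin r w w <-> sbin r z z).
  { intros r. rewrite (tbin r w w) tw. exact (iff_sym (ebin r None None)). }
  assert (Hu : forall u, sun u w <-> sun u z).
  { intros u. rewrite (tun u w) tw. exact (iff_sym (eun u None)). }
  assert (Hl1 : forall d, List.In d D -> (olt w d <-> olt z d)).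
  { intros d pd. rewrite (tlt w d) tw (td d pd). exact (iff_sym (elt None (Some (exist P d pd)))). }
  assert (Hl2 : forall d, List.In d D -> (olt d w <-> olt d z \/ d = z)).
  { intros d pd. rewrite (tlt d w) tw (td d pd). exact (iff_sym (elt (Some (exist P d pd)) None)). }
  assert (Hne : forall d, List.In d D -> w <> d).
  { intros d pd E. assert (E2 : t w = t d) by (rewrite E; reflexivity).
    rewrite tw (td d pd) in E2. apply einj in E2. discriminate. }
  assert (XD : forall x, List.In x X -> List.In x D).
  { intros x px. right. apply List.in_or_app. left; exact px. }
  assert (YD : forall y, List.In y Y -> List.In y D).
  { intros y py. right. apply List.in_or_app. right; exact py. }
  set g2 := fun a : A => if excluded_middle_informative (a = z) then w else a.
  assert (g2z : g2 z = w).
  { unfold g2; destruct (excluded_middle_informative (z = z)) as [e0|n]; [reflexivity | exfalso; apply n; reflexivity]. }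
  assert (g2x : forall x, List.In x X -> g2 x = x).
  { intros x px. unfold g2; destruct (excluded_middle_informative (x = z)) as [E|E]; [subst; contradiction | reflexivity]. }
  assert (Lc : forall x, List.In x (z :: X) -> x = z \/ (List.In x X /\ x <> z)).
  { intros x [E|px]; [left; symmetry; exact E | right; split; [exact px | intros ->; contradiction]]. }
  destruct (Hhom (z :: X) g2) as [tau [taut tauL]].
  { intros x y px py. destruct (Lc x px) as [->|[px' nx]], (Lc y py) as [->|[py' ny]];
      rewrite ?g2z ?g2x //; intros E.
    - exfalso; eapply Hne; [apply XD; eassumption | congruence].
    - exfalso; eapply Hne; [apply XD; eassumption | congruence]. }
  { intros u x px. destruct (Lc x px) as [->|[px' nx]]; rewrite ?g2z ?g2x //; try exact (iff_sym (Hu u)). }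
  { intros r x y px py. destruct (Lc x px) as [->|[px' nx]], (Lc y py) as [->|[py' ny]];
      rewrite ?g2z ?g2x //; try exact (iff_sym (Hbw r)).
    all: try (rewrite (Hb1 r y (XD y py')); tauto).
    all: try (rewrite (Hb2 r x (XD x px')); tauto).
    all: tauto. }
  { intros x y px py. destruct (Lc x px) as [->|[px' nx]], (Lc y py) as [->|[py' ny]];
      rewrite ?g2z ?g2x //; try (split; intros H; exfalso; exact (Hirr _ H)).
    all: try (rewrite (Hl1 y (XD y py')); tauto).
    all: try (rewrite (Hl2 x (XD x px')); tauto).
    all: tauto. }
  assert (tz : tau z = w) by (rewrite (tauL z (or_introl (Logic.eq_refl z))); exact g2z).
  exists tau. split; [exact taut|]. split; [|split; [|split]].
  - intros x px. rewrite (tauL x (or_intror px)). exact (g2x x px).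
  - intros y py. rewrite tz. intros [E|[r [H|H]]].
    + exact (Hne y (YD y py) E).
    + apply (Hb1 r y (YD y py)) in H. exact (HXY y (proj1 H) py).
    + apply (Hb2 r y (YD y py)) in H. exact (HXY y (proj1 H) py).
  - rewrite tz. intros [E|[r [H|H]]].
    + exact (Hne z zD E).
    + apply (Hb1 r z zD) in H. exact (zX (proj1 H)).
    + apply (Hb2 r z zD) in H. exact (zX (proj1 H)).
  - rewrite tz. apply (Hl2 z zD). right; reflexivity.
Qed.
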